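(* In the construction described in the context, for every $i\in\{1,\dots,t-1\}$ there exists a vertex $v_i\in V_{cc}$ with $v_i\in X_i$ and $v_i\notin X_j$ for all $j<i$. Moreover, there exists a vertex $u\in V_{cc}$ with $u\notin X_j$ for all $j\in\{1,\dots,t-1\}$.
   Context: Setting: $G=(V,E)$ is a connected finite undirected graph (parallel edges allowed), $w:E\to\mathbb{R}_{\ge0}$ edge weights, $c:E\to\mathbb{R}_{>0}$ edge costs, $n=|V|$. For $S\subseteq V$, $C_G(S)=\{e\in E:|e\cap S|=1\}$ (complete cut; its edges cross it) and $C_G(S,W)=\{e\in C_G(S):w(e)<W\}$ (partial cut). $F\subseteq E$ is a set with $G'=G\setminus F=(V,E\setminus F)$ connected; $B=c(F)$ and $\Delta=\mathrm{MST}(G')-\mathrm{MST}(G)$ (MST weights w.r.t. $w$). Construction: let $T$ be a minimum spanning tree of $G$ and $T\cap F=\{e_1,\dots,e_{t-1}\}$, with $t\ge2$. Removing these edges splits $T$ into components with vertex sets $A_1,\dots,A_t$ (a partition of $V$). Let $G'_{cc}$ be the multigraph with vertex set $V_{cc}=\{A_1,\dots,A_t\}$ having, for every edge $\{u,v\}\in E\setminus F$ with $u\in A_i$, $v\in A_j$, an edge between $A_i$ and $A_j$ of weight $w(\{u,v\})$ (identified with the original edge). Let $T'_{cc}$ be a minimum spanning tree of $G'_{cc}$, with edges $e'_1,\dots,e'_{t-1}$ indexed so that $w(e'_1)\le\dots\le w(e'_{t-1})$ (ties broken arbitrarily). For each $i$, deleting $e'_i,e'_{i+1},\dots,e'_{t-1}$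 from $T'_{cc}$ leaves a forest in which $e'_i$ joins two components $L_i,R_i\subseteq V_{cc}$. Counters $k(A)=0$ for all $A\in V_{cc}$ initially, and $k(S)=\max_{A\in S}k(A)$. For $i=1,\dots,t-1$ in order: set $X_i=L_i$ if $k(L_i)\le k(R_i)$, else $X_i=R_i$; then increase $k(A)$ by $1$ for every $A\in X_i$. Identifying a set of vertices of $G'_{cc}$ with the union of the corresponding vertex sets in $V$, define $C_i=C_G(X_i,w(e'_i))$. *)

(* Defs.v *)
From mathcomp Require Import all_boot all_order all_algebra.
Set Implicit Arguments. Unset Strict Implicit. Unset Printing Implicit Defensive.
Import Order.TTheory GRing.Theory Num.Theory.

Definition adj (U E : finType) (ends : E -> U * U) (S : {set E}) : rel U :=
  fun x y => [exists e in S, (ends e == (x, y)) || (ends e == (y, x))].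

Definition connected_on (U E : finType) (ends : E -> U * U)
    (D : {set U}) (S : {set E}) : Prop :=
  forall x y, x \in D -> y \in D -> connect (adj ends S) x y.

(* S is a spanning tree of the multigraph (D, E0): S is a subset of E0 with
   endpoints in D, (D,S) is connected, and (D,S) is acyclic (every edge of S
   is a bridge of S, i.e. its endpoints are disconnected in S minus it). *)
Definition is_spanning_tree (U E : finType) (ends : E -> U * U)
    (D : {set U}) (E0 S : {set E}) : Prop :=
  [/\ S \subset E0,
      (forall e, e \in S -> (ends e).1 \in D /\ (ends e).2 \in D),
      connected_on ends D S &
      forall e, e \in S -> ~~ connect (adj ends (S :\ e)) (ends e).1 (ends e).2].

Definition is_MST (R : realFieldType) (U E : finType) (ends : E -> U * U)
    (w : E -> R) (D : {set U}) (E0 S : {set E}) : Prop :=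
  is_spanning_tree ends D E0 S /\
  forall S', is_spanning_tree ends D E0 S' ->
    (\sum_(e in S) w e <= \sum_(e in S') w e)%R.

Section Construction.
Variables (V E : finType) (ends : E -> V * V) (T F : {set E}).

Definition comp (x : V) : {set V} := [set y | connect (adj ends (T :\: F)) x y].

Definition Vcc : {set {set V}} := [set comp x | x : V].

(* Endpoints of an edge of G'_cc (the edge {u,v} joins comp u and comp v). *)
Definition ends_cc (e : E) : {set V} * {set V} :=
  (comp (ends e).1, comp (ends e).2).

Definition comp_cc (pre : seq E) (A : {set V}) : {set {set V}} :=
  [set B in Vcc | connect (adj ends_cc [set x in pre]) A B].

Definition kmax (k : {set V} -> nat) (S : {set {set V}}) : nat :=
  \max_(A in S) k A.

(* Processing e'_i with counters k, the already processed edges being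
   pre = [e'_1; ...; e'_{i-1}]: L_i, R_i are the components of the forest
   (e'_1..e'_{i-1}) containing the two ends of e'_i; the list of the X_i. *)
Fixpoint run (k : {set V} -> nat) (pre rest : seq E) : seq {set {set V}} :=
  match rest with
  | [::] => [::]
  | e :: rest' =>
      let L := comp_cc pre (ends_cc e).1 in
      let Rr := comp_cc pre (ends_cc e).2 in
      let X := if kmax k L <= kmax k Rr then L else Rr in
      X :: run (fun A => k A + (A \in X)) (rcons pre e) rest'
  end.

(* Xs s = [X_1; ...; X_{t-1}] for s = [e'_1; ...; e'_{t-1}]. *)
Definition Xs (s : seq E) : seq {set {set V}} := run (fun _ => 0) [::] s.

End Construction.

(* Main.v *)
Require Import Defs.
From mathcomp Require Import all_boot all_order all_algebra.
Import Order.TTheory GRing.Theory Num.Theory.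

Lemma adj_sym (U E : finType) (ends : E -> U * U) (S : {set E}) :
  symmetric (adj ends S).
Proof.
move=> x y; apply/existsP/existsP => -[e /andP[eS H]]; exists e;
  by rewrite eS orbC.
Qed.

Lemma connect_adj_sym (U E : finType) (ends : E -> U * U) (S : {set E}) x y :
  connect (adj ends S) x y = connect (adj ends S) y x.
Proof. by rewrite (sym_connect_sym (@adj_sym U E ends S)). Qed.

Lemma connect_adj_mono (U E : finType) (ends : E -> U * U) (S S' : {set E}) x y :
  S \subset S' -> connect (adj ends S) x y -> connect (adj ends S') x y.
Proof.
move=> sub; apply: connect_sub => a b /existsP[e /andP[eS H]].
apply: connect1; apply/existsP; exists e; by rewrite (subsetP sub).
Qed.

Section Main.
Variables (V E : finType) (ends : E -> V * V) (T F : {set E}).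
Notation cc := (ends_cc ends T F).
Notation VC := (Vcc ends T F).
Notation ccomp := (comp_cc ends T F).

Definition Inv (k : {set V} -> nat) (pre : seq E) :=
  forall A, A \in VC -> exists2 B, B \in ccomp pre A & k B = 0.

Lemma pre_sub (pre : seq E) e : [set x in pre] \subset [set x in rcons pre e].
Proof. by apply/subsetP => x; rewrite !inE mem_rcons inE orbC => ->. Qed.

Lemma step k pre e L0 R0 :
  Inv k pre -> L0 \in VC -> R0 \in VC ->
  adj cc [set x in rcons pre e] L0 R0 ->
  ~~ connect (adj cc [set x in pre]) L0 R0 ->
  Inv (fun A => k A + (A \in ccomp pre L0)) (rcons pre e).
Proof.
move=> I L0V R0V eLR nc A AV.
have [B] := I A AV; rewrite /comp_cc inE => /andP[BV AB] kB.
case BX: (B \in ccomp pre L0); last first.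
  exists B; last by rewrite kB BX.
  by rewrite /comp_cc inE BV (@connect_adj_mono _ _ cc _ _ _ _ (pre_sub pre e) AB).
have [C] := I R0 R0V; rewrite /comp_cc inE => /andP[CV RC] kC.
move: BX; rewrite /comp_cc inE => /andP[_ LB].
have CX : (C \in ccomp pre L0) = false.
  apply/negbTE; rewrite /comp_cc inE CV /=; apply/negP => LC.
  move/negP: nc; apply; apply: connect_trans LC _.
  by rewrite connect_adj_sym.
exists C; last by rewrite kC CX.
rewrite /comp_cc inE CV /=.
have m := @connect_adj_mono _ _ cc _ _ _ _ (pre_sub pre e).
apply: connect_trans (m _ _ AB) _.
apply: connect_trans (_ : connect _ B L0) _; first by rewrite connect_adj_sym; apply: m.
apply: connect_trans (connect1 eLR) _.
exact: m.
Qed.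

Lemma cc1V e : (cc e).1 \in VC.
Proof. by rewrite /ends_cc /Vcc /=; apply/imsetP; exists (ends e).1. Qed.
Lemma cc2V e : (cc e).2 \in VC.
Proof. by rewrite /ends_cc /Vcc /=; apply/imsetP; exists (ends e).2. Qed.

Lemma self_in pre A : A \in VC -> A \in ccomp pre A.
Proof. by move=> AV; rewrite /comp_cc inE AV connect0. Qed.

Lemma gen (Tcc : {set E}) :
  (forall e, e \in Tcc -> ~~ connect (adj cc (Tcc :\ e)) (cc e).1 (cc e).2) ->
  forall s k pre, Inv k pre -> uniq (pre ++ s) -> {subset pre ++ s <= Tcc} ->
  (forall i, (i < size s)%N ->
     exists v, [/\ v \in VC, v \in nth set0 (run ends T F k pre s) i, k v = 0 &
                   forall j, (j < i)%N -> v \notin nth set0 (run ends T F k pre s) j])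
  /\ (forall A, A \in VC -> exists u, [/\ u \in VC, k u = 0 &
     forall j, (j < size s)%N -> u \notin nth set0 (run ends T F k pre s) j]).
Proof.
move=> acyc; elim=> [|e s IH] k pre I U S.
  split=> // A AV; have [B] := I A AV; rewrite /comp_cc inE => /andP[BV _] kB.
  by exists B.
have eT : e \in Tcc by apply: S; rewrite mem_cat inE eqxx orbT.
have nc : ~~ connect (adj cc [set x in pre]) (cc e).1 (cc e).2.
  apply/negP => H; move/negP: (acyc e eT); apply.
  apply: connect_adj_mono H; apply/subsetP => x; rewrite !inE => xp.
  have -> : x != e.
    apply/eqP => xe; move: U; rewrite cat_uniq => /and3P[_ + _].
    by move/hasPn => /(_ e); rewrite inE eqxx -xe xp => /(_ isT).
  by apply: S; rewrite mem_cat xp.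
have adjLR : adj cc [set x in rcons pre e] (cc e).1 (cc e).2.
  by apply/existsP; exists e; rewrite inE mem_rcons inE eqxx /=; apply/orP; left.
simpl.
set L := ccomp pre (cc e).1. set Rr := ccomp pre (cc e).2.
set X := if _ then L else Rr.
have I' : Inv (fun A => k A + (A \in X)) (rcons pre e).
  rewrite /X; case: ifP => _.
    exact: step (cc1V e) (cc2V e) adjLR nc.
  apply: step (cc2V e) (cc1V e) _ _ => //.
    by rewrite adj_sym.
  by rewrite connect_adj_sym.
have U' : uniq (rcons pre e ++ s) by rewrite cat_rcons.
have S' : {subset rcons pre e ++ s <= Tcc} by rewrite cat_rcons.
have [IH1 IH2] := IH _ _ I' U' S'.
have XwV : exists v, [/\ v \in VC, v \in X & k v = 0].
  have [Y YV ->] : exists2 Y, Y \in VC & X = ccomp pre Y.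
    by rewrite /X; case: ifP => _; [exists (cc e).1; first exact: cc1V|
                                     exists (cc e).2; first exact: cc2V].
  have [B Bin kB] := I Y YV; exists B; split=> //.
  by move: Bin; rewrite /comp_cc inE => /andP[].
split.
  case=> [_|i]; first by have [v [? ? ?]] := XwV; exists v; split.
  rewrite /= ltnS => /IH1 [v [vV vin kv nj]].
  have /andP[kv0 vX] : (k v == 0) && (v \notin X).
    by move: kv; case: (v \in X); rewrite ?addn1 ?addn0 // => ->.
  exists v; split=> //; first exact/eqP.
  by case=> [//|j]; rewrite ltnS => /nj.
move=> A AV; have [u [uV ku nj]] := IH2 A AV.
have /andP[ku0 uX] : (k u == 0) && (u \notin X).
  by move: ku; case: (u \in X); rewrite ?addn1 ?addn0 // => ->.
exists u; split=> //; first exact/eqP.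
by case=> [//|j]; rewrite /= ltnS => /nj.
Qed.
End Main.

Theorem mainTheorem11 (R : realFieldType) (V E : finType)
    (ends : E -> V * V) (w : E -> R) (F T Tcc : {set E}) (s : seq E) :
  (forall e, (ends e).1 != (ends e).2) ->
  (forall e, (0 <= w e)%R) ->
  connected_on ends [set: V] [set: E] ->
  connected_on ends [set: V] (~: F) ->
  is_MST ends w [set: V] [set: E] T ->
  T :&: F != set0 ->
  is_MST (ends_cc ends T F) w (Vcc ends T F) (~: F) Tcc ->
  uniq s -> [set e in s] = Tcc -> sorted (fun a b => (w a <= w b)%R) s ->
  (forall i, (i < size s)%N ->
     exists v, [/\ v \in Vcc ends T F, v \in nth set0 (Xs ends T F s) i &
                   forall j, (j < i)%N -> v \notin nth set0 (Xs ends T F s) j])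
  /\
  (exists u, u \in Vcc ends T F /\
     forall j, (j < size s)%N -> u \notin nth set0 (Xs ends T F s) j).
Proof.
move=> _ _ _ _ _ TF [[_ _ _ acyc] _] us sT _.
have I0 : Inv _ _ ends T F (fun _ => 0) [::].
  by move=> A AV; exists A => //; apply: self_in.
have sub : {subset [::] ++ s <= Tcc} by move=> x xs; rewrite -sT inE.
have [H1 H2] := gen _ _ _ _ _ _ acyc s _ _ I0 us sub.
split.
  by move=> i /H1 [v [? ? _ ?]]; exists v; split.
have [e] := set0Pn _ TF.
have AV := cc1V _ _ ends T F e.
have [u [uV _ nj]] := H2 _ AV.
by exists u.
Qed.
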